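(* Let $(X,\leq)$ be a poset and $K$ a field, and let $\mathcal{U}_1=\{\alpha\in FI(X,K)\mid \alpha_{xx}=1\text{ for all }x\in X\}$. The following are equivalent: (1) $\mathcal{U}_1$ is solvable; (2) $\mathcal{U}_1$ is nilpotent; (3) $X$ is bounded. Moreover, in this case $\mathcal{U}_1$ has nilpotency class $l(X)$ and derived length $\lceil\log_2(l(X)+1)\rceil$.
   Context: $FI(X,K)$ is the finitary incidence algebra: the $K$-vector space of formal sums $\alpha=\sum_{x\leq y}\alpha_{xy}e_{xy}$ ($x,y\in X$, $\alpha_{xy}\in K$) such that for every pair $x<y$ only finitely many $x\leq u<v\leq y$ have $\alpha_{uv}\neq0$, with convolution product $\alpha\beta=\sum_{x\leq y}\big(\sum_{x\leq z\leq y}\alpha_{xz}\beta_{zy}\big)e_{xy}$ and identity $\delta=\sum_{x}e_{xx}$. $\mathcal{U}_1=\delta+J(FI(X,K))$ is a subgroup of the group of units. The length $l(X)$ is the supremum of $|C|-1$ over finite chains $C\subseteq X$; $X$ is bounded if $l(X)<\infty$. $\lceil t\rceil$ is the ceiling. *)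

(* Defs.v *)
From HB Require Import structures.
From mathcomp Require Import all_boot all_order all_algebra.
From mathcomp Require Import boolp classical_sets cardinality fsbigop.
Set Implicit Arguments. Unset Strict Implicit. Unset Printing Implicit Defensive.
Import Order.TTheory GRing.Theory.
Local Open Scope classical_set_scope.
Local Open Scope ring_scope.

(* An element sum_{x<=y} a_xy e_xy is represented by the function       *)
(* (x,y) |-> a_xy, required to vanish when not x <= y.                  *)
Section Incidence.
Variables (d : Order.disp_t) (X : porderType d) (K : fieldType).

Definition ialg := X -> X -> K.

Definition idelta : ialg := fun x y => if x == y then 1 else 0.

(* convolution product: (ab)_xy = sum_{x <= z <= y} a_xz b_zy
   (a finitely supported sum; it is a finite sum for a, b in FI) *)
Definition imul (a b : ialg) : ialg :=
  fun x y => \sum_(z \in [set z | (x <= z)%O /\ (z <= y)%O]) a x z * b z y.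

Definition finitary (a : ialg) : Prop :=
  forall x y : X, (x < y)%O ->
    finite_set [set uv : X * X | [/\ (x <= uv.1)%O, (uv.1 < uv.2)%O,
                                     (uv.2 <= y)%O & a uv.1 uv.2 != 0]].

Definition FI : set ialg :=
  [set a | (forall x y : X, ~~ (x <= y)%O -> a x y = 0) /\ finitary a].

Definition U1 : set ialg := [set a | FI a /\ forall x : X, a x x = 1].

Definition chain (s : seq X) : bool := sorted (fun a b => (a < b)%O) s.

Definition bounded : Prop := exists n : nat, forall s, chain s -> (size s <= n)%N.

(* l(X) = L : the supremum of |C| - 1 over finite chains C is L *)
Definition length_eq (L : nat) : Prop :=
  (exists s, chain s /\ size s = L.+1) /\ forall s, chain s -> (size s <= L.+1)%N.

End Incidence.

Section Grp.
Variables (T : Type) (mul : T -> T -> T) (e : T) (G : set T).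

(* H is a subgroup of G (inverses taken in G) *)
Definition is_subgroup (H : set T) : Prop :=
  [/\ H `<=` G, H e, (forall a b, H a -> H b -> H (mul a b))
    & (forall a b, H a -> G b -> mul a b = e -> H b)].

Definition gen (S : set T) : set T :=
  fun x => forall H, is_subgroup H -> S `<=` H -> H x.

(* set of commutators [a,b] = a^-1 b^-1 a b, a in A, b in B:
   c = [a,b] iff (b a) c = a b *)
Definition comm_set (A B : set T) : set T :=
  [set c | G c /\ exists a b, [/\ A a, B b & mul (mul b a) c = mul a b]].

Definition commg (A B : set T) : set T := gen (comm_set A B).

Fixpoint derived (n : nat) : set T :=
  if n is n'.+1 then commg (derived n') (derived n') else G.

(* lower central series: lcs n = gamma_{n+1}; lcs 0 = G,
   lcs (n+1) = [lcs n, G] *)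
Fixpoint lcs (n : nat) : set T :=
  if n is n'.+1 then commg (lcs n') G else G.

Definition grp_solvable : Prop := exists n, derived n = [set e].
Definition grp_nilpotent : Prop := exists n, lcs n = [set e].

Definition nil_class (c : nat) : Prop :=
  lcs c = [set e] /\ forall k, lcs k = [set e] -> (c <= k)%N.

Definition derived_length (n : nat) : Prop :=
  derived n = [set e] /\ forall k, derived k = [set e] -> (n <= k)%N.

End Grp.

(* Main.v *)
Require Import Defs.
From HB Require Import structures.
From mathcomp Require Import all_boot all_order all_algebra.
From mathcomp Require Import boolp classical_sets cardinality fsbigop.

Module Helpers.
Set Implicit Arguments. Unset Strict Implicit. Unset Printing Implicit Defensive.
Import Order.TTheory GRing.Theory.
Local Open Scope classical_set_scope.
Local Open Scope ring_scope.


Section GrpL.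
Variables (T : Type) (mul : T -> T -> T) (e : T) (G : set T).

Lemma gen_min (S H : set T) : is_subgroup mul e G H -> S `<=` H -> gen mul e G S `<=` H.
Proof. by move=> HH SH x; apply. Qed.

Lemma sub_gen (S : set T) : S `<=` gen mul e G S.
Proof. by move=> x Sx H _ SH; apply: SH. Qed.

Lemma gen_e (S : set T) : gen mul e G S e.
Proof. by move=> H [] . Qed.

Lemma gen_mono (S S' : set T) : S `<=` S' -> gen mul e G S `<=` gen mul e G S'.
Proof. by move=> SS x gx H HH S'H; apply: gx => // y /SS /S'H. Qed.

Lemma comm_mono (A B A' B' : set T) : A `<=` A' -> B `<=` B' ->
  comm_set mul G A B `<=` comm_set mul G A' B'.
Proof.
move=> AA BB c [Gc [a [b [Aa Bb E]]]]; split=> //; exists a, b; split=> //.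
  exact: AA. exact: BB.
Qed.

End GrpL.



Section Inc.
Variables (d : Order.disp_t) (X : porderType d) (K : fieldType).
Local Notation ialg := (ialg X K).
Local Notation imul := (@imul d X K).
Local Notation e := (@idelta d X K).
Local Notation U1 := (@U1 d X K).

Lemma sum_int (F : X -> K) (p q : X) (r : seq X) : uniq r ->
  (forall z, z \in r -> (p <= z)%O /\ (z <= q)%O) ->
  (forall z, (p <= z)%O -> (z <= q)%O -> z \notin r -> F z = 0) ->
  \sum_(z \in [set z | (p <= z)%O /\ (z <= q)%O]) F z = \sum_(z <- r) F z.
Proof.
move=> ur rA F0; rewrite (fsbigE r) //.
- rewrite big_seq_cond [RHS]big_seq; apply: eq_bigl => z.
  by case: (boolP (z \in r)) => //= zr; rewrite mem_set //; apply: rA.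
- by move=> z [pz zq]; apply: F0.
Qed.

Lemma imul_off (a b : ialg) p q : ~~ (p <= q)%O -> imul a b p q = 0.
Proof.
move=> npq; rewrite /imul fsbig1 // => z [pz zq].
by move: npq; rewrite (le_trans pz zq).
Qed.

Lemma imul_diag (a b : ialg) p : imul a b p p = a p p * b p p.
Proof.
rewrite /imul (sum_int (r := [:: p])) ?big_seq1 //.
  by move=> z; rewrite inE => /eqP ->.
by move=> z pz zp; rewrite inE => /eqP []; apply/le_anti; rewrite pz zp.
Qed.

Lemma imul_lt (a b : ialg) p q : (p < q)%O ->
  (forall z, (p < z)%O -> (z < q)%O -> a p z * b z q = 0) ->
  imul a b p q = a p p * b p q + a p q * b q q.
Proof.
move=> pq H; rewrite /imul (sum_int (r := [:: p; q])).
- by rewrite big_cons big_seq1.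
- by rewrite /= inE andbT (lt_eqF pq).
- by move=> z; rewrite !inE => /orP[] /eqP ->; split; rewrite // ltW.
move=> z pz zq; rewrite !inE negb_or => /andP[zp zq'].
by apply: H; rewrite lt_neqAle ?pz ?zq // ?andbT // eq_sym.
Qed.


Definition FIoff (a : ialg) := forall p q : X, ~~ (p <= q)%O -> a p q = 0.

Lemma U1_off a : U1 a -> FIoff a.
Proof. by case=> [[]]. Qed.

Lemma imul_FIoff a b : FIoff (imul a b).
Proof. by move=> p q; apply: imul_off. Qed.

Lemma U1_e : U1 e.
Proof.
split; last by move=> x; rewrite /idelta eqxx.
split.
  by move=> x y nxy; rewrite /idelta; case: eqP => // xy; rewrite xy lexx in nxy.
move=> x y _; apply: sub_finite_set (finite_set0 _) => -[u v] /= [_ uv _].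
by rewrite /idelta (lt_eqF uv) eqxx.
Qed.

Lemma U1_mul a b : U1 a -> U1 b -> U1 (imul a b).
Proof.
move=> [[a0 fa] a1] [[b0 fb] b1]; split; last by move=> x; rewrite imul_diag a1 b1 mulr1.
split; first exact: imul_FIoff.
move=> x y xy.
set Sa := [set uv : X * X | [/\ (x <= uv.1)%O, (uv.1 < uv.2)%O, (uv.2 <= y)%O & a uv.1 uv.2 != 0]].
set Sb := [set uv : X * X | [/\ (x <= uv.1)%O, (uv.1 < uv.2)%O, (uv.2 <= y)%O & b uv.1 uv.2 != 0]].
have fSa : finite_set Sa by apply: fa.
have fSb : finite_set Sb by apply: fb.
apply: (sub_finite_set (B := Sa `|` Sb `|` [set (fun p q : X * X => (p.1, q.2)) s t | s in Sa & t in Sb])).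
  2: by rewrite !finite_setU; split; [split|apply: finite_image2].
move=> [u v] /= [xu uv vy nz].
have : exists w, ((u <= w)%O /\ (w <= v)%O) /\ a u w * b w v != 0.
  apply/not_existsP => H; move/eqP: nz; apply; rewrite /imul fsbig1 // => w uwv.
  by apply/eqP; rewrite -[_ == 0]negbK; apply/negP => nzw; apply: (H w); split.
move=> [w [[uw wv] nzw]].
have [awz bwz] : a u w != 0 /\ b w v != 0.
  by split; apply/eqP => E; move: nzw; rewrite E ?mul0r ?mulr0 eqxx.
case: (eqVneq w u) => [wu|nwu].
  by left; right; rewrite /Sb /=; split=> //; rewrite -wu.
case: (eqVneq w v) => [wv'|nwv].
  by left; left; rewrite /Sa /=; split=> //; rewrite -wv'.
right; exists (u, w); last exists (w, v); last by [].
  split=> //=; first by rewrite lt_neqAle eq_sym nwu uw.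
  exact: le_trans wv vy.
split=> //=; first exact: le_trans xu uw.
by rewrite lt_neqAle nwv wv.
Qed.

Definition tt_ (x y : X) : ialg :=
  fun p q => e p q + (if (p == x) && (q == y) then 1 else 0).

Definition Rm (f : ialg) (x y : X) : ialg :=
  fun p q => f p q + (if q == y then f p x else 0).

Lemma U1_t x y : (x < y)%O -> U1 (tt_ x y).
Proof.
move=> xy; split; last first.
  move=> p; rewrite /tt_ /idelta eqxx; case: (eqVneq p x) => [->|_]; last by rewrite addr0.
  by rewrite (lt_eqF xy) addr0.
split.
  move=> p q npq; rewrite /tt_ /idelta; case: (eqVneq p q) => [pq|_]; first by rewrite pq lexx in npq.
  case: (eqVneq p x) => [px|_]; case: (eqVneq q y) => [qy|_] //=; rewrite ?addr0 //.
  by rewrite px qy (ltW xy) in npq.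
move=> u v _; apply: sub_finite_set (finite_set1 (x, y)) => -[p q] /= [_ pq _].
rewrite /tt_ /idelta (lt_eqF pq) add0r.
by case: (eqVneq p x) => [->|]; case: (eqVneq q y) => [->|] //=; rewrite eqxx.
Qed.

Lemma imul_t f x y : (x < y)%O -> FIoff f -> imul f (tt_ x y) = Rm f x y.
Proof.
move=> xy f0; apply/funext => p; apply/funext => q.
case: (boolP (p <= q)%O) => pq; last first.
  rewrite imul_off // /Rm f0 // add0r; case: eqP => // qy; rewrite f0 //.
  by apply: contra pq => px; rewrite qy (le_trans px (ltW xy)).
have ttqq : tt_ x y q q = 1.
  rewrite /tt_ /idelta eqxx; case: (eqVneq q x) => [qx|_]; last by rewrite addr0.
  by rewrite qx (lt_eqF xy) addr0.
have ttz : forall z, z != q -> tt_ x y z q = if (z == x) && (q == y) then 1 else 0.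
  by move=> z zq; rewrite /tt_ /idelta (negbTE zq) add0r.
case: (boolP ((q == y) && (p <= x)%O)) => [/andP[/eqP qy px]|H].
  have xq : x != q by rewrite qy (lt_eqF xy).
  rewrite /imul (sum_int (r := [:: q; x])).
  - rewrite big_cons big_seq1 ttqq ttz // eqxx qy eqxx /Rm eqxx.
    by rewrite !mulr1.
  - by rewrite /= inE andbT eq_sym.
  - move=> z; rewrite !inE => /orP[] /eqP ->; split=> //.
    by rewrite qy ltW.
  move=> z pz zq; rewrite !inE negb_or => /andP[zq' zx].
  by rewrite ttz // (negbTE zx) mulr0.
rewrite /imul (sum_int (r := [:: q])).
- rewrite big_seq1 ttqq mulr1 /Rm; case: (eqVneq q y) => [qy|]; last by rewrite addr0.
  by rewrite (f0 p x) ?addr0 //; move: H; rewrite qy eqxx.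
- by [].
- by move=> z; rewrite inE => /eqP ->.
move=> z pz zq; rewrite inE => zq'; rewrite ttz //.
case: (eqVneq z x) => [zx|]; last by rewrite mulr0.
case: (eqVneq q y) => [qy|]; last by rewrite mulr0.
by move: H; rewrite qy eqxx -zx pz.
Qed.


Lemma comm_tt x y z : (x < y)%O -> (y < z)%O ->
  imul (imul (tt_ y z) (tt_ x y)) (tt_ x z) = imul (tt_ x y) (tt_ y z).
Proof.
move=> xy yz; have xz := lt_trans xy yz.
rewrite [LHS](imul_t xz (imul_FIoff _ _)) (imul_t xy (U1_off (U1_t yz))).
rewrite (imul_t yz (U1_off (U1_t xy))).
have e1 := lt_eqF xy; have e2 := gt_eqF xy; have e3 := lt_eqF yz; have e4 := gt_eqF yz.
have e5 := lt_eqF xz; have e6 := gt_eqF xz.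
apply/funext => p; apply/funext => q; rewrite /Rm /tt_ /idelta.
have cls : forall w : X, [\/ w = x, w = y, w = z | [&& w != x, w != y & w != z]].
  move=> w; case: (eqVneq w x) => [?|?]; first by constructor 1.
  case: (eqVneq w y) => [?|?]; first by constructor 2.
  case: (eqVneq w z) => [?|?]; first by constructor 3.
  by constructor 4; apply/and3P.
case: (cls p) => [->|->|->|/and3P[px py pz]];
case: (cls q) => [->|->|->|/and3P[qx qy qz]];
rewrite ?eqxx ?e1 ?e2 ?e3 ?e4 ?e5 ?e6 ?(negbTE px) ?(negbTE qx) ?(negbTE py) ?(negbTE qy) ?(negbTE pz) ?(negbTE qz) /= ?(addr0, add0r) //.
Qed.

Lemma tt_neq x y : (x < y)%O -> tt_ x y <> e.
Proof.
move=> xy /(congr1 (fun f => f x y)); rewrite /tt_ /idelta (lt_eqF xy) !eqxx /= add0r.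
by move/eqP; rewrite oner_eq0.
Qed.

End Inc.



Section Ch.
Variables (d : Order.disp_t) (X : porderType d) (K : fieldType).
Local Notation ialg := (ialg X K).
Local Notation imul := (@imul d X K).
Local Notation e := (@idelta d X K).
Local Notation U1 := (@U1 d X K).

Inductive ch : nat -> X -> X -> Prop :=
| ch0 x : ch 0 x x
| chS k x z y : (x < z)%O -> ch k z y -> ch k.+1 x y.

Lemma ch_snoc k x z y : ch k x z -> (z < y)%O -> ch k.+1 x y.
Proof.
elim=> [w wy|k' a b c ab _ IH cy]; first by apply: chS wy (ch0 _).
by apply: chS ab (IH cy).
Qed.

Lemma ch_cat i j x z y : ch i x z -> ch j z y -> ch (i + j)%N x y.
Proof.
move=> H; elim: H y => [w|k a b c ab _ IH] y H2 //.
by rewrite addSn; apply: chS ab (IH _ H2).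
Qed.

Lemma ch_path k x y : ch k x y -> exists s, path (fun a b => (a < b)%O) x s /\ size s = k.
Proof.
elim=> [w|k' a b c ab _ [s [ps sz]]]; first by exists [::].
by exists (b :: s); rewrite /= ab ps sz.
Qed.

Definition D (m : nat) x y := exists k, (m <= k)%N /\ ch k x y.

Lemma D_l m x z y : (x < z)%O -> D m z y -> D m x y.
Proof. by move=> xz [k [mk c]]; exists k.+1; split; [apply: leqW|apply: chS xz c]. Qed.

Lemma D_r m x z y : D m x z -> (z < y)%O -> D m x y.
Proof. by move=> [k [mk c]] zy; exists k.+1; split; [apply: leqW|apply: ch_snoc c zy]. Qed.

Lemma D_cat i j x z y : D i x z -> D j z y -> D (i + j) x y.
Proof.
by move=> [k [ik c]] [k' [jk c']]; exists (k + k')%N; split; [apply: leq_add|apply: ch_cat c c'].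
Qed.

Definition Nset (m : nat) : set ialg :=
  [set a | U1 a /\ forall x y, x != y -> ~ D m x y -> a x y = 0].

Lemma Nset_zero m a x z : Nset m a -> x != z -> a x z != 0 -> D m x z.
Proof. by move=> [_ H] xz nz; apply: contrapT => nD; move/eqP: nz; apply; apply: H. Qed.

Lemma cross_zero i j a b x y : Nset i a -> Nset j b -> ~ D (i + j) x y ->
  forall z, (x < z)%O -> (z < y)%O -> a x z * b z y = 0.
Proof.
move=> Na Nb nD z xz zy.
case: (eqVneq (a x z) 0) => [->|az]; first by rewrite mul0r.
case: (eqVneq (b z y) 0) => [->|bz]; first by rewrite mulr0.
have h1 : D i x z by apply: Nset_zero Na _ az; rewrite lt_eqF.
have h2 : D j z y by apply: Nset_zero Nb _ bz; rewrite lt_eqF.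
by exfalso; apply: nD; apply: D_cat h1 h2.
Qed.

Lemma Nset_sub m : is_subgroup imul e U1 (Nset m).
Proof.
split.
- by move=> a [].
- split; first exact: U1_e.
  by move=> x y xy _; rewrite /idelta (negbTE xy).
- move=> a b [Ua Ha] [Ub Hb]; split; first exact: U1_mul.
  move=> x y xy nD; case: (boolP (x <= y)%O) => le_xy; last exact: imul_off.
  have lxy : (x < y)%O by rewrite lt_neqAle xy.
  rewrite imul_lt //; last first.
    move=> z xz zy; rewrite (Ha x z) ?mul0r ?(lt_eqF xz) //.
    by move=> Dz; apply: nD; apply: D_r Dz zy.
  by rewrite (Hb x y) ?(Ha x y) ?mulr0 ?mul0r ?addr0.
- move=> a b [Ua Ha] Ub ab; split=> // x y xy nD.
  case: (boolP (x <= y)%O) => le_xy; last exact: (U1_off Ub).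
  have lxy : (x < y)%O by rewrite lt_neqAle xy.
  have := congr1 (fun f => f x y) ab; rewrite /= imul_lt //; last first.
    move=> z xz zy; rewrite (Ha x z) ?mul0r ?(lt_eqF xz) //.
    by move=> Dz; apply: nD; apply: D_r Dz zy.
  by rewrite (Ha x y) // mul0r addr0 Ua.2 mul1r /idelta (negbTE xy).
Qed.

Lemma Nset1 : U1 `<=` Nset 1.
Proof.
move=> a Ua; split=> // x y xy nD.
case: (boolP (x <= y)%O) => le_xy; last exact: (U1_off Ua).
have lxy : (x < y)%O by rewrite lt_neqAle xy.
by exfalso; apply: nD; exists 1%N; split=> //; apply: chS lxy (ch0 _).
Qed.

Lemma Nset_triv B m : (forall k x y, ch k x y -> (k <= B)%N) -> (B < m)%N ->
  Nset m `<=` [set e].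
Proof.
move=> HB Bm a [Ua Ha]; apply/funext => x; apply/funext => y.
rewrite /idelta; case: (eqVneq x y) => [->|xy]; first exact: Ua.2.
apply: Ha => // -[k [mk c]]; have := HB _ _ _ c.
by rewrite leqNgt (leq_trans Bm mk).
Qed.

Lemma Nset_comm B i j : (forall k x y, ch k x y -> (k <= B)%N) ->
  comm_set imul U1 (Nset i) (Nset j) `<=` Nset (i + j).
Proof.
move=> HB c [Uc [a [b [Na Nb E]]]]; split=> //.
have Ua := Na.1; have Ub := Nb.1.
suff : forall n x y, (forall k, ch k x y -> (k <= n)%N) -> x != y -> ~ D (i + j) x y -> c x y = 0.
  by move=> H x y; apply: H; move=> k; apply: HB.
elim=> [|n IH] x y bnd xy nD;
  (case: (boolP (x <= y)%O) => le_xy; last exact: (U1_off Uc));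
  have lxy : (x < y)%O by rewrite lt_neqAle xy.
  by have := bnd _ (chS lxy (ch0 _)).
have := congr1 (fun f => f x y) E; rewrite /= imul_lt //; last first.
  move=> z xz zy; rewrite (IH z y) ?mulr0 ?(lt_eqF zy) //.
    move=> k c'; have := bnd _ (chS xz c'); by [].
  by move=> Dz; apply: nD; apply: D_l xz Dz.
have nD' : ~ D (j + i) x y by rewrite addnC.
rewrite (imul_lt lxy (cross_zero Na Nb nD)) (imul_lt lxy (cross_zero Nb Na nD')).
rewrite imul_diag !Ua.2 !Ub.2 !Uc.2 !mul1r !mulr1 => H.
have : c x y + (a x y + b x y) = 0 + (a x y + b x y) by rewrite add0r H addrC.
by move/addIr.
Qed.

End Ch.



Section Main.
Variables (d : Order.disp_t) (X : porderType d) (K : fieldType).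
Local Notation ialg := (ialg X K).
Local Notation imul := (@imul d X K).
Local Notation e := (@idelta d X K).
Local Notation U1 := (@U1 d X K).
Local Notation lcs := (lcs imul e U1).
Local Notation der := (derived imul e U1).
Local Notation tt := (@tt_ d X K).

Lemma U1_sub : is_subgroup imul e U1 U1.
Proof. by split=> //; [exact: U1_e|move=> a b; exact: U1_mul]. Qed.

Lemma lcs_e n : lcs n e.
Proof. by case: n => [|n]; [exact: U1_e|exact: gen_e]. Qed.

Lemma der_e n : der n e.
Proof. by case: n => [|n]; [exact: U1_e|exact: gen_e]. Qed.

Lemma lcs_U1 n : lcs n `<=` U1.
Proof. by case: n => [|n] //=; apply: gen_min U1_sub _ => c []. Qed.

Lemma der_lcs n : der n `<=` lcs n.
Proof.
elim: n => [|n IH] //=; apply: gen_mono; apply: comm_mono => //.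
by move=> x /IH /lcs_U1.
Qed.

Lemma lcs_N B : (forall k x y, @ch d X k x y -> (k <= B)%N) ->
  forall n, lcs n `<=` @Nset d X K n.+1.
Proof.
move=> HB; elim=> [|n IH] /=; first exact: Nset1.
apply: gen_min; first exact: Nset_sub.
rewrite -addn1; apply: subset_trans (Nset_comm HB (i := n.+1) (j := 1)).
by apply: comm_mono => //; apply: Nset1.
Qed.

Lemma der_N B : (forall k x y, @ch d X k x y -> (k <= B)%N) ->
  forall n, der n `<=` @Nset d X K (2 ^ n).
Proof.
move=> HB; elim=> [|n IH] /=; first exact: Nset1.
apply: gen_min; first exact: Nset_sub.
rewrite expnS mul2n -addnn; apply: subset_trans (Nset_comm HB (i := 2 ^ n) (j := 2 ^ n)).
exact: comm_mono.
Qed.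

Lemma comm_in (A B : set ialg) x y z : (x < y)%O -> (y < z)%O -> A (tt x y) -> B (tt y z) ->
  gen imul e U1 (comm_set imul U1 A B) (tt x z).
Proof.
move=> xy yz Ax By; apply: sub_gen; split; first exact: U1_t (lt_trans xy yz).
by exists (tt x y), (tt y z); split=> //; apply: comm_tt.
Qed.

Lemma nth_lt (s : seq X) x0 i j : chain s -> (i < j)%N -> (j < size s)%N ->
  (nth x0 s i < nth x0 s j)%O.
Proof.
move=> hs ij js; apply: (sorted_ltn_nth lt_trans x0 hs) => //.
  by rewrite inE (ltn_trans ij js).
Qed.

Lemma lcs_low (s : seq X) x0 : chain s -> forall k, (k.+1 < size s)%N ->
  lcs k (tt (nth x0 s 0) (nth x0 s k.+1)).
Proof.
move=> hs; elim=> [|k IH] ks /=; first by apply: U1_t; apply: nth_lt.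
apply: (comm_in (y := nth x0 s k.+1)).
- by apply: nth_lt => //; apply: ltnW.
- by apply: nth_lt.
- by apply: IH; apply: ltnW.
- by apply: U1_t; apply: nth_lt.
Qed.

Lemma der_low (s : seq X) x0 : chain s -> forall n i j, (j < size s)%N -> (2 ^ n + i <= j)%N ->
  der n (tt (nth x0 s i) (nth x0 s j)).
Proof.
move=> hs; elim=> [|n IH] i j js hij /=.
  by apply: U1_t; apply: nth_lt.
have hm : (2 ^ n + i < size s)%N.
  apply: leq_ltn_trans js; apply: leq_trans hij; rewrite leq_add2r expnS mul2n -addnn leq_addr //.
apply: (comm_in (y := nth x0 s (2 ^ n + i))).
- apply: (nth_lt x0 hs) hm; by rewrite -{1}[i]add0n ltn_add2r expn_gt0.
- apply: (nth_lt x0 hs) js; apply: leq_trans hij.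
  by rewrite ltn_add2r ltn_exp2l.
- by apply: IH.
- apply: IH => //; apply: leq_trans hij.
  by rewrite expnS mul2n -addnn addnA.
Qed.

Lemma HB_of N : (forall s : seq X, chain s -> (size s <= N.+1)%N) ->
  forall k x y, @ch d X k x y -> (k <= N)%N.
Proof.
move=> H k x y /ch_path [s [ps sz]]; have := H (x :: s) ps.
by rewrite /= sz.
Qed.

Lemma seteq_e (S : set ialg) : S `<=` [set e] -> S e -> S = [set e].
Proof. by move=> Se eS; apply/seteqP; split=> // x ->. Qed.

End Main.

End Helpers.
Import Helpers.

Theorem corollary1p7 (d : Order.disp_t) (X : porderType d) (K : fieldType) :
  (grp_solvable (@imul d X K) (@idelta d X K) (@U1 d X K) <->
     grp_nilpotent (@imul d X K) (@idelta d X K) (@U1 d X K)) /\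
  (grp_nilpotent (@imul d X K) (@idelta d X K) (@U1 d X K) <-> @bounded d X) /\
  (forall L : nat, @length_eq d X L ->
     nil_class (@imul d X K) (@idelta d X K) (@U1 d X K) L /\
     derived_length (@imul d X K) (@idelta d X K) (@U1 d X K) (up_log 2 L.+1)).
Proof.
have solv_bnd : grp_solvable (@imul d X K) (@idelta d X K) (@U1 d X K) -> @bounded d X.
  move=> [n Hn]; case: (pselect (@bounded d X)) => // nb.
  have : exists s : seq X, chain s /\ (2 ^ n < size s)%N.
    case: (pselect (exists s : seq X, chain s /\ (2 ^ n < size s)%N)) => // H; exfalso; apply: nb; exists (2 ^ n) => s hs.
    by rewrite leqNgt; apply/negP => lt; apply: H; exists s.
  move=> [s [hs sz]].
  case: s hs sz => [|x0 s'] hs sz //.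
  have := @der_low d X K _ x0 hs n 0 (2 ^ n) sz ltac:(by rewrite addn0).
  rewrite Hn => eq.
  have h0 : (0 < 2 ^ n)%N by rewrite expn_gt0.
  by exfalso; apply: (tt_neq (nth_lt x0 hs h0 sz) eq).
have bnd_nil : @bounded d X -> grp_nilpotent (@imul d X K) (@idelta d X K) (@U1 d X K).
  move=> [N HN].
  have HB := @HB_of d X N (fun s hs => leqW (HN s hs)).
  exists N; apply: seteq_e; last exact: lcs_e.
  apply: subset_trans; [exact: (@lcs_N d X K N HB N)|exact: (@Nset_triv d X K N N.+1 HB (ltnSn N))].
have nil_solv : grp_nilpotent (@imul d X K) (@idelta d X K) (@U1 d X K) ->
    grp_solvable (@imul d X K) (@idelta d X K) (@U1 d X K).
  move=> [n Hn]; exists n; apply: seteq_e; last exact: der_e.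
  by rewrite -Hn; apply: der_lcs.
split; first by split=> [/solv_bnd/bnd_nil|/nil_solv].
split; first by split=> [/nil_solv/solv_bnd|/bnd_nil].
move=> L [[s [hs sz]] Hall].
have HB := @HB_of d X L Hall.
case: s hs sz => [|x0 s'] hs sz //.
set s := x0 :: s' in hs sz.
split.
  split.
    apply: seteq_e; last exact: lcs_e.
    apply: subset_trans; [exact: (@lcs_N d X K L HB L)|exact: (@Nset_triv d X K L L.+1 HB (ltnSn L))].
  move=> k Hk; rewrite leqNgt; apply/negP => kL.
  have := @lcs_low d X K s x0 hs k ltac:(by rewrite sz ltnS).
  rewrite Hk => eq.
  have h1 : (k.+1 < size s)%N by rewrite sz ltnS.
  exact: (tt_neq (nth_lt x0 hs (ltn0Sn k) h1) eq).
set E := up_log 2 L.+1.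
split.
  apply: seteq_e; last exact: der_e.
  apply: subset_trans; first exact: (@der_N d X K L HB E).
  apply: (@Nset_triv d X K L _ HB).
  exact: (up_logP L.+1 (isT : (1 < 2)%N)).
move=> k Hk; rewrite leqNgt; apply/negP => kE.
have hk : (2 ^ k <= L)%N.
  rewrite leqNgt; apply/negP => Lk.
  have := up_log_min (isT : (1 < 2)%N) Lk.
  by rewrite -/E leqNgt kE.
have := @der_low d X K s x0 hs k 0 (2 ^ k) ltac:(by rewrite sz ltnS) ltac:(by rewrite addn0).
rewrite Hk => eq.
have h0 : (0 < 2 ^ k)%N by rewrite expn_gt0.
have h1 : (2 ^ k < size s)%N by rewrite sz ltnS.
exact: (tt_neq (nth_lt x0 hs h0 h1) eq).
Qed.
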